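(* Let $(W,S)$ be a Coxeter system of finite rank with just one bad 5-edge $\{x,y\}$. Let $B_1,\dots,B_n$ ($n\ge0$) be the distinct bad separators of $S$, let $F_i$ be the set of good foci of $B_i$, and put $S_i=B_i\cup F_i$. Then there is a unique subset $S_0\subseteq S$ such that $S_0,S_1,\dots,S_n$ form a reduced visual star decomposition of $(W,S)$ with center $S_0$, namely: $S=S_0\cup S_1\cup\dots\cup S_n$; $S_0\cap S_i=B_i$ is a proper subset of both $S_0$ and $S_i$ for each $i\ge1$; $S_i\cap S_j\subseteq S_0$ for distinct $i,j\ge1$; and any $s,t\in S$ with $m(s,t)<\infty$ lie in a common $S_i$ (so $W$ is the fundamental group of the star of groups with center vertex group $\langle S_0\rangle$, leaf vertex groups $\langle S_i\rangle$ and edge groups $\langle B_i\rangle$); and moreover $\{x,y\}\subseteq S_0$ and $S_0$ has no bad separators (with respect to the Coxeter system $(\langle S_0\rangle,S_0)$ and the bad edge $\{x,y\}$). Equivalently, $(W,S)$ has a unique reduced visual graph of groups decomposition whose graph is a star, whose center vertex system $(\langle S_0\rangle,S_0)$ satisfies $\{x,y\}\subseteq S_0$ and has no bad separators, whose edge systems are $(\langle B_i\rangle,B_i)$ for the bad separators $B_1,\dots,B_n$, and whose other vertex systems $(\langle S_i\rangle,S_i)$ satisfy $B_i=S_0\cap S_i$ and $S_i-B_i=F_i$.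
   Context: Coxeter system $(W,S)$: $W=\langle S\mid (st)^{m(s,t)}\ (m(s,t)<\infty)\rangle$, $m(s,s)=1$, $m(s,t)=m(t,s)\in\{2,\dots,\infty\}$; $\langle A\rangle$ the visual subgroup generated by $A\subseteq S$. $\Gamma(W,S)$: labeled graph on $S$ with edge $\{s,t\}$ iff $s\neq t$, $m(s,t)<\infty$. A simplex is $A\subseteq S$ with all $m(s,t)<\infty$; $A$ is irreducible if the graph on $A$ with edges $m(s,t)\ge3$ is connected; maximal irreducible simplex: not properly contained in another irreducible simplex. $A^\perp=\{s\in S: m(s,a)=2\ \forall a\in A\}$. Types ${\bf G}_3,{\bf G}_4$: Coxeter diagram a path with labels $3,5$ resp. $3,3,5$. A set of bad edges is a set $\mathcal B_2$ of pairs $\{a,b\}\subseteq S$ with $5\le m(a,b)<\infty$ such that every irreducible simplex properly containing $\{a,b\}$ has type ${\bf G}_3$ or ${\bf G}_4$; ''just one bad 5-edge $\{x,y\}$'' means $\mathcal B_2=\{\{x,y\}\}$ and $m(x,y)=5$. An irreducible simplex is bad if it contains a bad edge. Separation $(S_1,S_0,S_2)$: $S=S_1\cup S_2$, $S_0=S_1\cap S_2$, $S_i-S_0\ne\emptyset$, $m(s,t)=\infty$ for $s\in S_1-S_0$, $t\in S_2-S_0$. $B$ is a $(c,f)$-separator if there is a separation $(S_1,B,S_2)$ with $c\in S_1-B$, $f\in S_2-B$ (equivalently $c,f$ lie in different components of $\Gamma(W,S)-B$); minimal if no proper subset is one. A bad separator of $S$ is a subset $B\subseteq S$ for which there are $a,b\in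 B$ with $m(a,b)=2$ (eyes) and $c\in S-B$ such that $A=\{a,b,c\}$ is a bad maximal irreducible simplex, $B\subseteq\{a,b\}\cup A^\perp$, and there exists $f\in S-B$ such that $B$ is a minimal $(c,f)$-separator of $S$; every such $f$ is a good focus of $B$. *)

(* Defs.v *)
From mathcomp Require Import all_boot.
Set Implicit Arguments.
Unset Strict Implicit.
Unset Printing Implicit Defensive.

Section Coxeter.
Variable T : finType.
(* Coxeter matrix; the value 0 encodes m(s,t) = infinity. *)
Variable m : T -> T -> nat.

Definition coxeter_matrix : Prop :=
  (forall s, m s s = 1) /\ (forall s t, m s t = m t s) /\
  (forall s t, s != t -> m s t != 1).

Definition fin_m (s t : T) : bool := m s t != 0.

Definition simplex (A : {set T}) : Prop :=
  forall s t, s \in A -> t \in A -> fin_m s t.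

Definition irreducible (A : {set T}) : Prop :=
  A != set0 /\
  forall s t, s \in A -> t \in A ->
    connect (fun u v => [&& u \in A, v \in A & 3 <= m u v]) s t.

Definition irr_simplex (A : {set T}) : Prop := simplex A /\ irreducible A.

Definition max_irr_simplex (U A : {set T}) : Prop :=
  A \subset U /\ irr_simplex A /\
  forall A' : {set T}, A' \subset U -> irr_simplex A' -> ~ (A \proper A').

Definition type_G3 (A : {set T}) : Prop :=
  exists a b c, A = [set a; b; c] /\ m a b = 3 /\ m b c = 5 /\ m a c = 2.

Definition type_G4 (A : {set T}) : Prop :=
  exists a b c d, A = [set a; b; c; d] /\
    m a b = 3 /\ m b c = 3 /\ m c d = 5 /\
    m a c = 2 /\ m a d = 2 /\ m b d = 2.

(* {x,y} may serve as a bad edge (member of a set of bad edges) *)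
Definition bad_edge_ok (x y : T) : Prop :=
  x != y /\ 5 <= m x y /\ fin_m x y /\
  forall A, irr_simplex A -> [set x; y] \proper A -> type_G3 A \/ type_G4 A.

(* with the single bad edge {x,y}: an irreducible simplex is bad iff it contains {x,y} *)
Definition bad_simplex (x y : T) (A : {set T}) : Prop :=
  irr_simplex A /\ x \in A /\ y \in A.

Definition perp (U A : {set T}) : {set T} :=
  [set s in U | [forall a in A, m s a == 2]].

Definition separator (U B : {set T}) (c f : T) : Prop :=
  exists S1 S2 : {set T},
    S1 :|: S2 = U /\ S1 :&: S2 = B /\
    c \in S1 :\: B /\ f \in S2 :\: B /\
    forall s t, s \in S1 :\: B -> t \in S2 :\: B -> m s t = 0.

Definition min_separator (U B : {set T}) (c f : T) : Prop :=
  separator U B c f /\ forall B' : {set T}, B' \proper B -> ~ separator U B' c f.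

(* witness data (eyes a b, vertex c, focus f) making B a bad separator of U *)
Definition bad_sep_wit (x y : T) (U B : {set T}) (a b c f : T) : Prop :=
  B \subset U /\ a \in B /\ b \in B /\ m a b = 2 /\
  c \in U :\: B /\
  bad_simplex x y [set a; b; c] /\ max_irr_simplex U [set a; b; c] /\
  B \subset [set a; b] :|: perp U [set a; b; c] /\
  f \in U :\: B /\ min_separator U B c f.

Definition bad_separator (x y : T) (U B : {set T}) : Prop :=
  exists a b c f, bad_sep_wit x y U B a b c f.

Definition good_focus (x y : T) (U B : {set T}) (f : T) : Prop :=
  exists a b c, bad_sep_wit x y U B a b c f.

End Coxeter.

(* Main.v *)
Require Import Defs.
From mathcomp Require Import all_boot.
Set Implicit Arguments.

Definition er {T : finType} (m : T -> T -> nat) (U B : {set T}) : rel T :=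
  fun u v => [&& u \in U :\: B, v \in U :\: B & m u v != 0].

Lemma connect_ind' (T : finType) (e : rel T) (P : T -> Prop) (x : T) :
  P x -> (forall u v, P u -> e u v -> P v) -> forall y, connect e x y -> P y.
Proof.
move=> Px IH y /connectP [p pth ->].
elim: p x Px pth => //= z p IHp x Px /andP[exz pth].
exact: IHp (IH _ _ Px exz) pth.
Qed.

Lemma comp_in_S2 (T : finType) (m : T -> T -> nat) (U B S1 S2 : {set T}) (f : T) :
  (forall s t, m s t = m t s) -> S1 :|: S2 = U -> S1 :&: S2 = B ->
  (forall s t, s \in S1 :\: B -> t \in S2 :\: B -> m s t = 0) -> f \in S2 :\: B ->
  forall k, connect (er m U B) f k -> k \in S2 :\: B.
Proof.
move=> Hs HU HI He Hf; apply: connect_ind' => // u v Hu /and3P[_ Hv Huv].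
have : v \in S1 :|: S2 by rewrite HU; move: Hv; rewrite inE => /andP[].
rewrite inE => /orP[v1|v2].
  have v1' : v \in S1 :\: B by rewrite inE v1 andbT; move: Hv; rewrite inE => /andP[].
  by move: Huv; rewrite Hs (He _ _ v1' Hu).
by rewrite inE v2 andbT; move: Hv; rewrite inE => /andP[].
Qed.

Lemma sep_of_comp (T : finType) (m : T -> T -> nat) (K B2 : {set T}) (c f : T) :
  (forall k, k \in K -> k \notin B2) -> c \notin K -> c \notin B2 -> f \in K -> f \notin B2 ->
  (forall s t, t \in K -> s \notin K -> s \notin B2 -> m s t = 0) ->
  separator m setT B2 c f.
Proof.
move=> HK cK cB fK fB He.
exists (~: K), (K :|: B2); split; [|split; [|split; [|split]]].
- by apply/setP => v; rewrite !inE; case: (v \in K).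
- apply/setP => v; rewrite !inE; case: (boolP (v \in K)) => vK //=.
  by rewrite (negbTE (HK _ vK)).
- by rewrite !inE cB cK.
- by rewrite !inE fB fK.
- move=> s t; rewrite !inE => /andP[sB sK] /andP[tB /orP[tK|tB']].
    exact: He.
  by rewrite tB' in tB.
Qed.
Lemma wit_B (T : finType) (m : T -> T -> nat) (x y : T) (U B : {set T}) (a b c f : T) :
  (forall s t, m s t = m t s) ->
  bad_sep_wit m x y U B a b c f -> forall v, v \in B -> m x v != 0 /\ m y v != 0.
Proof.
move=> Hs [BU [aB [bB [mab [cUB [[[Hsimp _] [xA yA]] [_ [Bsub _]]]]]]]] v vB.
have aA : a \in [set a; b; c] by rewrite !inE eqxx.
have bA : b \in [set a; b; c] by rewrite !inE eqxx !orbT.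
move: (subsetP Bsub v vB); rewrite !inE => /orP[/orP[/eqP->|/eqP->] | /andP[_ /forallP H]].
- by split; [exact: (Hsimp x a xA aA) | exact: (Hsimp y a yA aA)].
- by split; [exact: (Hsimp x b xA bA) | exact: (Hsimp y b yA bA)].
- move: (implyP (H x) xA) (implyP (H y) yA) => /eqP h1 /eqP h2.
  by rewrite Hs h1 Hs h2.
Qed.

Lemma wit_F (T : finType) (m : T -> T -> nat) (x y : T) (U B : {set T}) (a b c f : T) :
  coxeter_matrix m -> m x y = 5 ->
  bad_sep_wit m x y U B a b c f ->
  (c = x \/ c = y) /\ m c f = 0 /\ f \in U :\: B /\ c \in U :\: B.
Proof.
move=> [Hd [Hs _]] Hxy [BU [aB [bB [mab [cUB [[_ [xA yA]] [_ [_ [fUB [[S1 [S2 [HU [HI [c1 [f2 He]]]]]] _]]]]]]]]]].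
split; last by split; [exact: He | split].
case: (eqVneq c x) => [->|cx]; first by left.
case: (eqVneq c y) => [->|cy]; first by right.
exfalso; move: xA yA; rewrite !inE (eq_sym x c) (eq_sym y c) (negbTE cx) (negbTE cy) !orbF.
have mba : m b a = 2 by rewrite Hs.
case/orP => /eqP ex; case/orP => /eqP ey; subst x y;
  by move: Hxy; rewrite ?Hd ?mab ?mba.
Qed.
Lemma focus_step (T : finType) (m : T -> T -> nat) (x y : T) (B : {set T}) (a b c s t : T) :
  (forall s t, m s t = m t s) ->
  bad_sep_wit m x y setT B a b c s -> m s t != 0 -> t \notin B ->
  bad_sep_wit m x y setT B a b c t.
Proof.
move=> Hs [BU [aB [bB [mab [cUB [bs [mx [Bsub [fUB [[S1 [S2 [HU [HI [c1 [s2 He]]]]]] Hmin]]]]]]]]]] mst tB.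
have tS2 : t \in S2 :\: B.
  have : t \in S1 :|: S2 by rewrite HU inE.
  rewrite inE => /orP[t1|t2]; last by rewrite inE t2 tB.
  have t1' : t \in S1 :\: B by rewrite inE t1 tB.
  by move: mst; rewrite Hs (He _ _ t1' s2).
do 8 (split; first by []).
split; first by rewrite inE tB inE.
split; first by exists S1, S2.
move=> B' pB' [S1' [S2' [HU' [HI' [c1' [t2' He']]]]]].
apply: (Hmin B' pB'); exists S1', S2'; do 3 (split; first by []).
split; last by [].
have sB' : s \notin B'.
  by apply/negP => sB'; move: s2; rewrite inE (subsetP (proper_sub pB') _ sB').
have : s \in S1' :|: S2' by rewrite HU' inE.
rewrite inE => /orP[s1|]; last by move=> s2'; rewrite inE s2' sB'.
have s1' : s \in S1' :\: B' by rewrite inE s1 sB'.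
by move: mst; rewrite (He' _ _ s1' t2').
Qed.

Lemma comp_facts (T : finType) (m : T -> T -> nat) (x y : T) (U B : {set T}) (a b c f : T) :
  (forall s t, m s t = m t s) ->
  bad_sep_wit m x y U B a b c f ->
  forall k, connect (er m U B) f k -> m c k = 0 /\ k \in U :\: B.
Proof.
move=> Hs [BU [aB [bB [mab [cUB [bs [mx [Bsub [fUB [[S1 [S2 [HU [HI [c1 [f2 He]]]]]] Hmin]]]]]]]]]] k Hk.
have := comp_in_S2 m Hs HU HI He f2 k Hk => k2.
split; first exact: He.
move: k2; rewrite !inE => /andP[-> kS2] /=.
by rewrite -HU inE kS2 orbT.
Qed.

Lemma nbr_in_comp (T : finType) (m : T -> T -> nat) (x y : T) (B : {set T}) (a b c f : T) :
  coxeter_matrix m ->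
  bad_sep_wit m x y setT B a b c f -> forall b0, b0 \in B ->
  exists k, connect (er m setT B) f k /\ m b0 k != 0.
Proof.
move=> [Hd [Hs _]] W b0 b0B.
have CF := comp_facts Hs W.
case: W => [BU [aB [bB [mab [cUB [bs [mx [Bsub [fUB [Hsep Hmin]]]]]]]]]].
case: (boolP [exists k, connect (er m setT B) f k && (m b0 k != 0)]).
  by move=> /existsP [k /andP[h1 h2]]; exists k.
move=> Hne; exfalso.
have H0 : forall k, connect (er m setT B) f k -> m b0 k = 0.
  move=> k Hk; apply/eqP; apply/negPn; apply/negP => H.
  by move: Hne; apply/negP; apply/negPn; apply/existsP; exists k; rewrite Hk H.
apply: (Hmin (B :\ b0) (properD1 b0B)).
pose K := [set k | connect (er m setT B) f k].
apply: (@sep_of_comp _ m K).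
- move=> k; rewrite inE => /CF [_]; rewrite !inE => /andP[kB _].
  by rewrite (negbTE kB) andbF.
- by rewrite inE; apply/negP => /CF [h _]; move: h; rewrite Hd.
- by move: cUB; rewrite !inE => /andP[cB _]; rewrite (negbTE cB) andbF.
- by rewrite inE connect0.
- by move: fUB; rewrite !inE => /andP[fB _]; rewrite (negbTE fB) andbF.
- move=> s t; rewrite !inE => tK sK sB; apply/eqP; apply/negPn; apply/negP => mst.
  case: (eqVneq s b0) => [sb|sb].
    by move: mst; rewrite sb (H0 _ tK).
  move: sB; rewrite sb /= => sB.
  move/negP: sK; apply; apply: (connect_trans tK); apply: connect1.
  have [_ ] := CF _ tK; rewrite !inE => /andP[tB _].
  by rewrite /er !inE tB sB Hs mst.
Qed.

Lemma sep_sub (T : finType) (m : T -> T -> nat) (x y : T) (B B' : {set T}) (a b c a' b' c' f : T) :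
  coxeter_matrix m -> m x y = 5 ->
  bad_sep_wit m x y setT B a b c f -> bad_sep_wit m x y setT B' a' b' c' f -> B \subset B'.
Proof.
move=> Hc Hxy W W'.
have Hs : forall s t, m s t = m t s by case: Hc => [_ [H _]].
have [cxy _] := wit_F Hc Hxy W.
have [cxy' _] := wit_F Hc Hxy W'.
have KB' : forall k, connect (er m setT B) f k -> k \notin B'.
  move=> k /(comp_facts Hs W) [h _]; apply/negP => /(wit_B Hs W') [h1 h2].
  by case: cxy => e; move: h; rewrite e => h; rewrite h in h1 h2.
have K'B : forall k, connect (er m setT B') f k -> k \notin B.
  move=> k /(comp_facts Hs W') [h _]; apply/negP => /(wit_B Hs W) [h1 h2].
  by case: cxy' => e; move: h; rewrite e => h; rewrite h in h1 h2.
have KK : forall k, connect (er m setT B) f k -> connect (er m setT B') f k.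
  move=> k Hk.
  suff : connect (er m setT B) f k /\ connect (er m setT B') f k by case.
  move: k Hk; apply: connect_ind'; first by split; apply: connect0.
  move=> u v [h1 h2] Huv.
  have hv : connect (er m setT B) f v by apply: connect_trans h1 (connect1 Huv).
  split => //; apply: connect_trans h2 (connect1 _).
  move: Huv; rewrite /er !inE /= => /and3P[_ _ ->].
  by rewrite (KB' _ h1) (KB' _ hv).
apply/subsetP => b0 b0B.
have [k [Hk mk]] := nbr_in_comp Hc W b0B.
apply/negPn/negP => b0B'.
have : connect (er m setT B') f b0.
  apply: connect_trans (KK _ Hk) (connect1 _).
  by rewrite /er !inE /= (KB' _ Hk) b0B' Hs mk.
by move/K'B; rewrite b0B.
Qed.
Unset Implicit Arguments.

Theorem theorem5p10 (T : finType) (m : T -> T -> nat) (x y : T) :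
  coxeter_matrix m ->
  m x y = 5 ->
  bad_edge_ok m x y ->
  forall (BS : {set {set T}}),
  (forall B : {set T}, B \in BS <-> bad_separator m x y setT B) ->
  forall (F : {set T} -> {set T}),
  (forall (B : {set T}) (f : T), f \in F B <-> good_focus m x y setT B f) ->
  let Si (B : {set T}) : {set T} := B :|: F B in
  exists! S0 : {set T},
    (S0 :|: \bigcup_(B in BS) Si B = setT) /\
    (forall B, B \in BS ->
       S0 :&: Si B = B /\ B \proper S0 /\ B \proper Si B) /\
    (forall B B', B \in BS -> B' \in BS -> B != B' ->
       Si B :&: Si B' \subset S0) /\
    (forall s t, m s t != 0 ->
       (s \in S0 /\ t \in S0) \/
       (exists B, B \in BS /\ s \in Si B /\ t \in Si B)) /\
    (x \in S0 /\ y \in S0) /\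
    (forall B : {set T}, ~ bad_separator m x y S0 B).
Proof.
move=> Hc Hxy _ BS HBS F HF Si.
have Hs : forall s t, m s t = m t s by case: Hc => [_ [H _]].
have Hd : forall s, m s s = 1 by case: Hc => [H _].
pose S0 := [set v | [forall B0 in BS, v \notin F B0]].
have Fwit : forall B0 v, v \in F B0 -> exists a b c, bad_sep_wit m x y setT B0 a b c v.
  by move=> B0 v /HF.
have F_notS0 : forall B0 v, B0 \in BS -> v \in F B0 -> v \notin S0.
  by move=> B0 v B0in vF; rewrite inE; apply/forall_inPn; exists B0; rewrite ?negbK.
have notS0_F : forall v, v \notin S0 -> exists B0, B0 \in BS /\ v \in F B0.
  by move=> v; rewrite inE => /forall_inPn [B0 B0in vF]; exists B0; rewrite -[v \in _]negbK.
have F_far : forall B0 v, v \in F B0 -> m x v = 0 \/ m y v = 0.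
  move=> B0 v /Fwit [a [b [c W]]]; have [[e|e] [h _]] := wit_F Hc Hxy W; rewrite -e; by [left|right].
have xS0 : x \in S0.
  apply/negPn/negP => /notS0_F [B0 [_ /F_far]]; rewrite Hd Hs Hxy; by case.
have yS0 : y \in S0.
  apply/negPn/negP => /notS0_F [B0 [_ /F_far]]; rewrite Hd Hxy; by case.
have BSwit : forall B0, B0 \in BS -> exists a b c f, bad_sep_wit m x y setT B0 a b c f.
  by move=> B0 /HBS.
have B_S0 : forall B0, B0 \in BS -> B0 \subset S0.
  move=> B0 /BSwit [a [b [c [f W]]]]; apply/subsetP => v vB.
  have [h1 h2] := wit_B Hs W vB.
  apply/negPn/negP => /notS0_F [B1 [_ /F_far]].
  by case => h; [rewrite h in h1 | rewrite h in h2].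
have F_notB : forall B0 v, v \in F B0 -> v \notin B0.
  move=> B0 v /Fwit [a [b [c W]]]; have [_ [_ [h _]]] := wit_F Hc Hxy W.
  by move: h; rewrite inE => /andP[].
have edge_aux : forall s t, m s t != 0 -> s \notin S0 ->
    exists B0, B0 \in BS /\ s \in Si B0 /\ t \in Si B0.
  move=> s t mst /notS0_F [B0 [B0in sF]]; exists B0; split => //.
  split; first by rewrite /Si inE sF orbT.
  rewrite /Si inE; case: (boolP (t \in B0)) => //= tB.
  have [a [b [c W]]] := Fwit _ _ sF.
  apply/HF; exists a, b, c; exact: focus_step Hs W mst tB.
exists S0; split.
  split.
    apply/setP => v; rewrite in_setT inE; case: (boolP (v \in S0)) => //= vS.
    have [B0 [B0in vF]] := notS0_F _ vS.
    by apply/bigcupP; exists B0 => //; rewrite /Si inE vF orbT.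
  split.
    move=> B0 B0in; have BS0 := B_S0 _ B0in.
    have [a [b [c [f W]]]] := BSwit _ B0in.
    split.
      apply/setP => v; rewrite /Si in_setI in_setU.
      case: (boolP (v \in B0)) => vB /=; first by rewrite (subsetP BS0 _ vB).
      by case: (boolP (v \in F B0)) => vF; rewrite ?andbF // (negbTE (F_notS0 _ _ B0in vF)).
    split.
      rewrite properE BS0 /=; apply/subsetPn; exists c.
        by have [[->|->] _] := wit_F Hc Hxy W.
      by have [_ [_ [_]]] := wit_F Hc Hxy W; rewrite inE => /andP[].
    rewrite properE subsetUl /=; apply/subsetPn; exists f.
      by rewrite inE; apply/orP; right; apply/HF; exists a, b, c.
    by have [_ [_ [h _]]] := wit_F Hc Hxy W; move: h; rewrite inE => /andP[].
  split.
    move=> B0 B1 B0in B1in neq; apply/subsetP => v; rewrite /Si in_setI !in_setU => /andP[h0 h1].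
    case/orP: h0 => [vB0|vF0]; first exact: (subsetP (B_S0 _ B0in)).
    case/orP: h1 => [vB1|vF1]; first exact: (subsetP (B_S0 _ B1in)).
    have [a [b [c W0]]] := Fwit _ _ vF0.
    have [a' [b' [c' W1]]] := Fwit _ _ vF1.
    move: neq; rewrite eqEsubset (sep_sub Hc Hxy W0 W1) (sep_sub Hc Hxy W1 W0).
    by [].
  split.
    move=> s t mst.
    case: (boolP (s \in S0)) => sS; last by right; exact: edge_aux.
    case: (boolP (t \in S0)) => tS; first by left.
    right; have mts : m t s != 0 by rewrite Hs.
    have [B0 [B0in [h1 h2]]] := edge_aux _ _ mts tS.
    by exists B0.
  split; first by [].
  move=> B0 [a [b [c [f W]]]].
  have [cxy [mcf [fS0B cS0B]]] := wit_F Hc Hxy W.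
  have CF := comp_facts Hs W.
  case: W => [BU [aB [bB [mab [_ [bs [[_ [irrA maxA]] [Bsub [_ [[S1 [S2 [HU [HI [c1 [f2 He]]]]]] Hmin]]]]]]]]]].
  have W' : bad_sep_wit m x y setT B0 a b c f.
    split; first exact: subsetT.
    do 3 (split; first by []).
    split; first by move: cS0B; rewrite !inE => /andP[-> _].
    split; first by [].
    split.
      split; first exact: subsetT.
      split; first by [].
      move=> A' _ irrA' pA.
      case: (boolP (A' \subset S0)) => sub; first exact: (maxA A' sub irrA' pA).
      case/subsetPn: sub => w wA' wS.
      have [B1 [_ /F_far]] := notS0_F _ wS.
      case: irrA' => [simp _].
      case: bs => [_ [xA yA]].
      have xA' := subsetP (proper_sub pA) _ xA.
      have yA' := subsetP (proper_sub pA) _ yA.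
      have h1 := simp _ _ xA' wA'.
      have h2 := simp _ _ yA' wA'.
      by rewrite /fin_m in h1 h2; case => h; [rewrite h in h1|rewrite h in h2].
    split.
      apply: (subset_trans Bsub); apply: setUS; apply/subsetP => v.
      by rewrite !inE => /andP[_ ->].
    split; first by move: fS0B; rewrite !inE => /andP[-> _].
    split.
      pose K := [set k | connect (er m S0 B0) f k].
      apply: (@sep_of_comp _ m K).
      - move=> k; rewrite inE => /CF [_]; rewrite inE => /andP[] //.
      - by rewrite inE; apply/negP => /CF [h _]; move: h; rewrite Hd.
      - by move: cS0B; rewrite inE => /andP[].
      - by rewrite inE connect0.
      - by move: fS0B; rewrite inE => /andP[].
      - move=> s t; rewrite !inE => tK sK sB; apply/eqP; apply/negPn; apply/negP => mst.
        have [mct] := CF _ tK; rewrite inE => /andP[tB tS].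
        case: (boolP (s \in S0)) => sS.
          move/negP: sK; apply; apply: (connect_trans tK); apply: connect1.
          by rewrite /er !in_setD tB tS sB sS Hs mst.
        have [B1 [B1in sF]] := notS0_F _ sS.
        have [a1 [b1 [c1' W1]]] := Fwit _ _ sF.
        case: (boolP (t \in B1)) => tB1.
          have [h1 h2] := wit_B Hs W1 tB1.
          by case: cxy => e; rewrite e in mct; [rewrite mct in h1|rewrite mct in h2].
        have Wt := focus_step t Hs W1 mst tB1.
        have : t \in F B1 by apply/HF; exists a1, b1, c1'.
        by move/(F_notS0 _ _ B1in); rewrite tS.
    move=> B' pB' [S1' [S2' [HU' [HI' [c1' [f2' He']]]]]].
    have B'S0 : B' \subset S0 := subset_trans (proper_sub pB') BU.
    apply: (Hmin B' pB'); exists (S1' :&: S0), (S2' :&: S0).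
    split; first by rewrite -setIUl HU' setTI.
    split; first by rewrite setIACA setIid HI'; apply/setIidPl.
    have cS0 : c \in S0 by move: cS0B; rewrite inE => /andP[].
    have fS0 : f \in S0 by move: fS0B; rewrite inE => /andP[].
    split; first by move: c1'; rewrite !in_setD in_setI cS0 andbT.
    split; first by move: f2'; rewrite !in_setD in_setI fS0 andbT.
    move=> s t; rewrite !in_setD !in_setI => /andP[sB /andP[s1 _]] /andP[tB /andP[t2 _]].
    by apply: He'; rewrite inE ?sB ?s1 ?tB ?t2.
  have : f \in F B0 by apply/HF; exists a, b, c.
  have B0in : B0 \in BS by apply/HBS; exists a, b, c, f.
  move/(F_notS0 _ _ B0in).
  by move: fS0B; rewrite inE => /andP[_ ->].
move=> S0' [HU [HB [_ [_ _]]]].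
apply/setP => v; apply/idP/idP => vS.
  apply/negPn/negP => vS'.
  have : v \in S0' :|: \bigcup_(B in BS) Si B by rewrite HU inE.
  rewrite inE (negbTE vS') /= => /bigcupP [B1 B1in].
  rewrite /Si inE => /orP[vB|vF].
    have [_ [/proper_sub sub _]] := HB _ B1in.
    by move: vS'; rewrite (subsetP sub _ vB).
  by move: vS; rewrite (negbTE (F_notS0 _ _ B1in vF)).
apply/negPn/negP => /notS0_F [B1 [B1in vF]].
have [h _] := HB _ B1in.
have : v \in S0' :&: Si B1 by rewrite inE vS /Si inE vF orbT.
by rewrite h => vB; move: (F_notB _ _ vF); rewrite vB.
Qed.
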